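(* Let $K,H$ be finite dimensional Hilbert spaces and $\phi:B(K)\to B(H)$ a positive linear map, and let $k\ge1$. (i) Assume $\phi\neq0$, and let $\phi_{cp}:B(K)\to B(H)$ be the linear map with Choi matrix $C_{\phi_{cp}}=1-\|C_\phi^+\|^{-1}C_\phi$. Then $\phi$ is $k$-positive if and only if $\sup\{(C_{\phi_{cp}}x,x): x\in S(k),\ \|x\|=1\}\le 1$. (ii) Suppose $k<\min(\dim K,\dim H)$ and there exists a unit vector $y=\sum_{i=1}^k x_i\otimes y_i\in S(k)$ ($x_i\in K$, $y_i\in H$) such that $(C_\phi y, y)=0$ and $C_\phi y\notin X\otimes Y$, where $X=\mathrm{span}(x_i)$ and $Y=\mathrm{span}(y_i)$. Then $\phi$ is not $(k+1)$-positive.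
   Context: Fix matrix units $(e_{ij})$ for $B(K)$; the Choi matrix of $\phi$ is $C_\phi=\sum_{i,j}e_{ij}\otimes\phi(e_{ij})\in B(K\otimes H)$, self-adjoint for positive $\phi$, and $C_\phi^+$ denotes its positive part (in $C_\phi=C_\phi^+-C_\phi^-$ with $C_\phi^\pm\ge0$ of orthogonal supports). $S(k)$ (the Schmidt class) is the set of vectors in $K\otimes H$ of the form $\sum_{i=1}^k x_i\otimes y_i$ with $x_i\in K$, $y_i\in H$ (not necessarily all nonzero). A map $\phi$ is $k$-positive if $\phi\otimes\iota:B(K\otimes L)\to B(H\otimes L)$ is positive for a $k$-dimensional Hilbert space $L$. *)

(* Defs.v *)
(* Finite-dimensional Hilbert spaces K = C^m, H = C^n over
   C = R[i] (complex numbers over an arbitrary model R of the reals).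
   B(K) = 'M_m, K (x) H = 'cV_(m*n) with the Kronecker product  *t  of
   mathcomp-real-closed's mxtens (index (i,j) |-> i*n + j). *)
From HB Require Import structures.
From mathcomp Require Import all_boot all_order all_algebra.
From mathcomp Require Export complex mxtens.
From mathcomp Require Export reals.
Set Implicit Arguments.
Unset Strict Implicit.
Unset Printing Implicit Defensive.
Import Order.TTheory GRing.Theory Num.Theory.
Local Open Scope ring_scope.

Section Defs.
Variable C : numClosedFieldType.

Definition adjmx {p q : nat} (A : 'M[C]_(p, q)) : 'M[C]_(q, p) :=
  (map_mx (fun z => z^*) A)^T.

(* inner product (x, y) = y^* x, linear in the first argument *)
Definition dotv {p : nat} (x y : 'cV[C]_p) : C := (adjmx y *m x) 0 0.

Definition psd {p : nat} (A : 'M[C]_p) : Prop :=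
  forall x : 'cV[C]_p, 0 <= dotv (A *m x) x.

Definition posmap {m n : nat} (phi : 'M[C]_m -> 'M[C]_n) : Prop :=
  forall A : 'M[C]_m, psd A -> psd (phi A).

Definition choi {m n : nat} (phi : 'M[C]_m -> 'M[C]_n) : 'M[C]_(m * n) :=
  \sum_(i < m) \sum_(j < m) (delta_mx i j *t phi (delta_mx i j)).

(* block (a,b) of X in B(K (x) L), L = C^k *)
Definition blk {m k : nat} (X : 'M[C]_(m * k)) (a b : 'I_k) : 'M[C]_m :=
  \matrix_(i, j) X (mxtens_index (i, a)) (mxtens_index (j, b)).

(* phi (x) iota : B(K (x) L) -> B(H (x) L), with dim L = k *)
Definition ampl {m n k : nat} (phi : 'M[C]_m -> 'M[C]_n)
  (X : 'M[C]_(m * k)) : 'M[C]_(n * k) :=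
  \sum_(a < k) \sum_(b < k) (phi (blk X a b) *t delta_mx a b).

Definition kpos {m n : nat} (k : nat) (phi : 'M[C]_m -> 'M[C]_n) : Prop :=
  forall X : 'M[C]_(m * k), psd X -> psd (ampl phi X).

Definition tensv {m n : nat} (x : 'cV[C]_m) (y : 'cV[C]_n) : 'cV[C]_(m * n) :=
  x *t y.

Definition in_Sk {m n : nat} (k : nat) (x : 'cV[C]_(m * n)) : Prop :=
  exists (xs : 'I_k -> 'cV[C]_m) (ys : 'I_k -> 'cV[C]_n),
    x = \sum_(i < k) tensv (xs i) (ys i).

(* P is the positive part of the self-adjoint A: A = P - N with P, N >= 0
   having orthogonal supports (ranges). *)
Definition is_pos_part {p : nat} (A P : 'M[C]_p) : Prop :=
  psd P /\ psd (P - A) /\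
  (forall u v : 'cV[C]_p, dotv (P *m u) ((P - A) *m v) = 0).

(* s = ||A|| (operator norm: sup of ||Ax||/||x||, attained in finite dim) *)
Definition is_opnorm {p : nat} (A : 'M[C]_p) (s : C) : Prop :=
  0 <= s /\
  (forall x : 'cV[C]_p, dotv (A *m x) (A *m x) <= s ^+ 2 * dotv x x) /\
  (exists x : 'cV[C]_p, x != 0 /\ dotv (A *m x) (A *m x) = s ^+ 2 * dotv x x).

Definition in_span {p k : nat} (xs : 'I_k -> 'cV[C]_p) (u : 'cV[C]_p) : Prop :=
  exists c : 'I_k -> C, u = \sum_(i < k) c i *: xs i.

Definition in_tens_span {m n k : nat} (xs : 'I_k -> 'cV[C]_m)
  (ys : 'I_k -> 'cV[C]_n) (z : 'cV[C]_(m * n)) : Prop :=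
  exists (r : nat) (us : 'I_r -> 'cV[C]_m) (vs : 'I_r -> 'cV[C]_n),
    (forall l, in_span xs (us l)) /\ (forall l, in_span ys (vs l)) /\
    z = \sum_(l < r) tensv (us l) (vs l).

End Defs.

(* Main.v *)
Require Import Defs.
From HB Require Import structures.
From mathcomp Require Import all_boot all_order all_algebra.
From mathcomp Require Import complex mxtens reals.
From mathcomp Require Import ring spectral sesquilinear.
Import Order.TTheory GRing.Theory Num.Theory.
Local Open Scope ring_scope.
Set Implicit Arguments.
Unset Strict Implicit.


Section Aux.
Variable C : numClosedFieldType.

Lemma cM (a b : C) : (a * b)^* = a^* * b^*. Proof. exact: rmorphM. Qed.
Lemma cN (a : C) : (- a)^* = - a^*. Proof. exact: rmorphN. Qed.
Lemma cD (a b : C) : (a + b)^* = a^* + b^*. Proof. exact: rmorphD. Qed.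
Lemma cB (a b : C) : (a - b)^* = a^* - b^*. Proof. exact: rmorphB. Qed.

Lemma dotvE p (x y : 'cV[C]_p) : dotv x y = \sum_i x i 0 * (y i 0)^*.
Proof. rewrite /dotv /adjmx !mxE; apply: eq_bigr => i _; by rewrite !mxE mulrC. all: try done. Qed.

Lemma dotvDl p (x y z : 'cV[C]_p) : dotv (x + y) z = dotv x z + dotv y z.
Proof. rewrite !dotvE -big_split; apply: eq_bigr => i _; rewrite !mxE mulrDl. all: try done. Qed.
Lemma dotvDr p (x y z : 'cV[C]_p) : dotv z (x + y) = dotv z x + dotv z y.
Proof. rewrite !dotvE -big_split; apply: eq_bigr => i _; rewrite !mxE rmorphD mulrDr. all: try done. Qed.
Lemma dotvZl p a (x z : 'cV[C]_p) : dotv (a *: x) z = a * dotv x z.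
Proof. rewrite !dotvE mulr_sumr; apply: eq_bigr => i _; rewrite !mxE mulrA. all: try done. Qed.
Lemma dotvZr p a (x z : 'cV[C]_p) : dotv z (a *: x) = a^* * dotv z x.
Proof. rewrite !dotvE mulr_sumr; apply: eq_bigr => i _; rewrite !mxE rmorphM /=.
by rewrite mulrCA. all: try done. Qed.
Lemma dotvC p (x y : 'cV[C]_p) : dotv y x = (dotv x y)^*.
Proof. rewrite !dotvE rmorph_sum; apply: eq_bigr => i _; rewrite rmorphM /= conjCK mulrC. all: try done. Qed.
Lemma dotv0l p (z : 'cV[C]_p) : dotv 0 z = 0.
Proof. by rewrite dotvE big1 // => i _; rewrite mxE mul0r. all: try done. Qed.
Lemma dotv0r p (z : 'cV[C]_p) : dotv z 0 = 0.
Proof. by rewrite dotvE big1 // => i _; rewrite mxE rmorph0 mulr0. all: try done. Qed.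
Lemma dotv_suml p I (r : seq I) (P : pred I) (F : I -> 'cV[C]_p) z :
  dotv (\sum_(i <- r | P i) F i) z = \sum_(i <- r | P i) dotv (F i) z.
Proof. elim/big_rec2: _ => [|i y1 y2 _ <-]; by rewrite ?dotv0l ?dotvDl. all: try done. Qed.
Lemma dotv_sumr p I (r : seq I) (P : pred I) (F : I -> 'cV[C]_p) z :
  dotv z (\sum_(i <- r | P i) F i) = \sum_(i <- r | P i) dotv z (F i).
Proof. elim/big_rec2: _ => [|i y1 y2 _ <-]; by rewrite ?dotv0r ?dotvDr. all: try done. Qed.
Lemma dotv_ge0 p (x : 'cV[C]_p) : 0 <= dotv x x.
Proof. rewrite dotvE; apply: sumr_ge0 => i _; exact: mul_conjC_ge0. all: try done. Qed.
Lemma dotv_eq0 p (x : 'cV[C]_p) : dotv x x = 0 -> x = 0.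
Proof.
rewrite dotvE => /eqP; rewrite psumr_eq0 => [/allP H|i _]; last exact: mul_conjC_ge0.
apply/matrixP => i j; rewrite ord1 mxE; apply/eqP.
by have := H i (mem_index_enum _); rewrite mul_conjC_eq0.
all: try done. Qed.
Lemma dotv_mulE p (A : 'M[C]_p) x y :
  dotv (A *m x) y = \sum_r \sum_s (y r 0)^* * A r s * x s 0.
Proof. rewrite dotvE; apply: eq_bigr => r _; rewrite mxE mulr_suml.
by apply: eq_bigr => s _; rewrite mulrC mulrA. all: try done. Qed.
End Aux.


Section Aux2.
Variable C : numClosedFieldType.

Lemma sum_tens (V : nmodType) m n (F : 'I_(m * n) -> V) :
  \sum_r F r = \sum_(i < m) \sum_(p < n) F (mxtens_index (i, p)).
Proof.
rewrite pair_big /= (reindex (@mxtens_index m n)) /=.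
  by apply: eq_bigr => -[i p].
by exists (@mxtens_unindex m n) => r _; rewrite (mxtens_indexK, mxtens_unindexK).
Qed.

Lemma sum_delta2 (V : lmodType C) m (i j : 'I_m) (F : 'I_m -> 'I_m -> V) :
  \sum_a \sum_b (delta_mx a b : 'M[C]_m) i j *: F a b = F i j.
Proof.
rewrite (bigD1 i) //= [X in _ + X]big1 => [|a ai]; last first.
  by rewrite big1 // => b _; rewrite mxE (eq_sym i) (negPf ai) /= scale0r.
rewrite addr0 (bigD1 j) //= big1 => [|b bj]; last by rewrite mxE (eq_sym j) (negPf bj) andbF scale0r.
by rewrite mxE !eqxx scale1r addr0.
Qed.

Variables (m n : nat) (phi : {linear 'M[C]_m -> 'M[C]_n}).

Lemma phi_expand (A : 'M[C]_m) :
  phi A = \sum_i \sum_j A i j *: phi (delta_mx i j).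
Proof.
rewrite {1}(matrix_sum_delta A) linear_sum; apply: eq_bigr => i _.
rewrite linear_sum; apply: eq_bigr => j _; by rewrite linearZ.
Qed.

Lemma choiE i j p q :
  choi phi (mxtens_index (i, p)) (mxtens_index (j, q)) = phi (delta_mx i j) p q.
Proof.
rewrite /choi summxE.
under eq_bigr do rewrite summxE.
under eq_bigr do under eq_bigr do rewrite tensmxE.
exact: (@sum_delta2 C^o m i j (fun a b => phi (delta_mx a b) p q)).
Qed.

Lemma amplE k (X : 'M[C]_(m * k)) a b p q :
  ampl phi X (mxtens_index (p, a)) (mxtens_index (q, b)) = phi (blk X a b) p q.
Proof.
rewrite /ampl summxE.
under eq_bigr do rewrite summxE.
under eq_bigr do under eq_bigr do rewrite tensmxE mulrC.
exact: (@sum_delta2 C^o k a b (fun c d => phi (blk X c d) p q)).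
Qed.
End Aux2.


Section K.
Variable C : numClosedFieldType.
Definition vcol m k (v : 'cV[C]_(m * k)) (a : 'I_k) : 'cV[C]_m :=
  \col_i v (mxtens_index (i, a)) 0.

Lemma tensvE m n (u : 'cV[C]_m) (y : 'cV[C]_n) i p j :
  tensv u y (mxtens_index (i, p)) j = u i 0 * y p 0.
Proof.
rewrite /tensv mxE mxtens_indexK /=.
by case: j => -[|//] ?; congr (_ * _); congr (_ _ _); apply: val_inj.
Qed.

Variables (m n : nat) (phi : {linear 'M[C]_m -> 'M[C]_n}).

Lemma Klem k (v : 'cV[C]_(m * k)) (w : 'cV[C]_(n * k)) :
  dotv (ampl phi (v *m adjmx v) *m w) w =
  dotv (choi phi *m (\sum_a tensv (map_mx (fun z => z^*) (vcol v a)) (vcol w a)))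
       (\sum_a tensv (map_mx (fun z => z^*) (vcol v a)) (vcol w a)).
Proof.
set x := \sum_a _.
have xE i p : x (mxtens_index (i, p)) 0 =
   \sum_a (v (mxtens_index (i, a)) 0)^* * w (mxtens_index (p, a)) 0.
  by rewrite /x summxE; apply: eq_bigr => a _; rewrite tensvE !mxE.
rewrite !dotv_mulE.
rewrite sum_tens; under eq_bigr do under eq_bigr do rewrite sum_tens.
rewrite [RHS]sum_tens; under [RHS]eq_bigr do under eq_bigr do rewrite sum_tens.
under eq_bigr do under eq_bigr do under eq_bigr do under eq_bigr do rewrite amplE phi_expand summxE.
under [RHS]eq_bigr do under eq_bigr do under eq_bigr do under eq_bigr do rewrite choiE !xE.
have blkE a b i j : blk (v *m adjmx v) a b i j =
   v (mxtens_index (i, a)) 0 * (v (mxtens_index (j, b)) 0)^*.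
  by rewrite !mxE big_ord1 !mxE.
under eq_bigr do under eq_bigr do under eq_bigr do under eq_bigr do
  under eq_bigr do rewrite summxE.
under eq_bigr do under eq_bigr do under eq_bigr do under eq_bigr do
  under eq_bigr do under eq_bigr do rewrite mxE blkE.
under eq_bigr do under eq_bigr do under eq_bigr do under eq_bigr do rewrite mulr_sumr mulr_suml.
under eq_bigr do under eq_bigr do under eq_bigr do under eq_bigr do under eq_bigr do rewrite mulr_sumr mulr_suml.
under [RHS]eq_bigr do under eq_bigr do under eq_bigr do under eq_bigr do rewrite rmorph_sum !mulr_suml.
under [RHS]eq_bigr do under eq_bigr do under eq_bigr do under eq_bigr do under eq_bigr do rewrite mulr_sumr.
rewrite exchange_big.
under eq_bigr do under eq_bigr do rewrite exchange_big.
under eq_bigr do rewrite exchange_big.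
under eq_bigr do under eq_bigr do under eq_bigr do rewrite exchange_big.
under eq_bigr do under eq_bigr do rewrite exchange_big.
under eq_bigr do under eq_bigr do under eq_bigr do under eq_bigr do rewrite exchange_big.
under eq_bigr do under eq_bigr do under eq_bigr do rewrite exchange_big.
under [RHS]eq_bigr do under eq_bigr do under eq_bigr do rewrite exchange_big.
under [RHS]eq_bigr do under eq_bigr do rewrite exchange_big.
under [RHS]eq_bigr do rewrite exchange_big.
rewrite [RHS]exchange_big.
under [RHS]eq_bigr do under eq_bigr do under eq_bigr do under eq_bigr do rewrite exchange_big.
under [RHS]eq_bigr do under eq_bigr do under eq_bigr do rewrite exchange_big.
under [RHS]eq_bigr do under eq_bigr do rewrite exchange_big.
under [RHS]eq_bigr do rewrite exchange_big.
under [RHS]eq_bigr do under eq_bigr do under eq_bigr do rewrite exchange_big.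
do 6 (apply: eq_bigr => ? _).
rewrite rmorphM /= conjCK; ring.
Qed.
End K.


Section P.
Variable C : numClosedFieldType.

Lemma cancel4 (u p v r p' v' : C) : u + p + (v + r) = u + p' + (v' + r) -> p + v = p' + v'.
Proof.
move=> h; transitivity (u + p + (v + r) - u - r); first ring.
rewrite h; ring.
Qed.

Lemma psd_polar p (X : 'M[C]_p) : psd X -> forall x y,
  dotv (X *m y) x = (dotv (X *m x) y)^*.
Proof.
move=> H x y.
have q z : (dotv (X *m z) z)^* = dotv (X *m z) z := conj_Creal (ger0_real (H z)).
have e1 := q (x + y).
rewrite mulmxDr !dotvDl !dotvDr !cD q q in e1.
have e2 := q (x + 'i *: y).
rewrite mulmxDr -scalemxAr !dotvDl !dotvDr !dotvZl !dotvZr !cD !cM q q in e2.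
rewrite conjCK conjCi in e2.
move: e1 e2; set a := dotv (X *m x) y; set b := dotv (X *m y) x.
set qx := dotv (X *m x) x; set qy := dotv (X *m y) y => e1 e2.
have E1 : a^* + b^* = a + b := cancel4 e1.
have E2 : 'i * a^* - 'i * b^* = - 'i * a + 'i * b.
  transitivity (qx + 'i * a^* + (- 'i * b^* + - 'i * ('i * qy)) - qx
     + 'i * ('i * qy)); first ring.
  rewrite e2; ring.
have E3 : 2 * b^* = 2 * a.
  transitivity ((a^* + b^*) + 'i * ('i * a^* - 'i * b^*)
     - ('i * 'i + 1) * (a^* - b^*)); first ring.
  rewrite E1 E2.
  transitivity (2 * a + ('i * 'i + 1) * (b - a) - ('i * 'i + 1) * (a^* - b^*));
    first ring.
  by rewrite mulCii addNr !mul0r subr0 addr0.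
have two : (2%:R : C) != 0 by rewrite pnatr_eq0.
have : b^* = a by apply: (mulfI two).
by move/(congr1 (fun z => z^*)); rewrite conjCK.
Qed.
End P.

Section P2.
Variable C : numClosedFieldType.

Lemma adjmxK p q (A : 'M[C]_(p, q)) : adjmx (adjmx A) = A.
Proof. by apply/matrixP => i j; rewrite !mxE conjCK. Qed.
Lemma adjmxM p q r (A : 'M[C]_(p, q)) (B : 'M[C]_(q, r)) :
  adjmx (A *m B) = adjmx B *m adjmx A.
Proof. by rewrite /adjmx map_mxM trmx_mul. Qed.
Lemma dotv_adj p q (A : 'M[C]_(p, q)) x y :
  dotv (A *m x) y = dotv x (adjmx A *m y).
Proof. by rewrite /dotv adjmxM adjmxK mulmxA. Qed.

Lemma dotv_delta p (u : 'cV[C]_p) i : dotv u (delta_mx i 0) = u i 0.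
Proof.
rewrite dotvE (bigD1 i) //= big1 => [|r ri]; last by rewrite mxE (negPf ri) conjC0 mulr0.
by rewrite mxE !eqxx conjC1 mulr1 addr0.
Qed.

Lemma psd_herm p (X : 'M[C]_p) : psd X -> forall i j, X j i = (X i j)^*.
Proof.
move=> H i j; have := psd_polar H (delta_mx j 0) (delta_mx i 0).
by rewrite -!colE !dotv_delta !mxE.
Qed.

Lemma psd_decomp p (X : 'M[C]_p) : psd X ->
  exists vs : 'I_p -> 'cV[C]_p, X = \sum_l vs l *m adjmx (vs l).
Proof.
move=> H.
have herm : map_mx (fun z => z^*) (X^T) = X.
  by apply/matrixP => i j; rewrite !mxE -psd_herm.
have normal : X \is normalmx by apply/normalmxP; rewrite herm.
move/orthomx_spectralP: normal.
set P := spectralmx X; set d := spectral_diag X.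
have Pu : P \is unitarymx by exact: spectral_unitarymx.
rewrite invmx_unitary //.
set U := map_mx _ (P^T).
move=> eX.
have PU : P *m U = 1%:M by apply/unitarymxP.
have adjU : adjmx U = P by apply/matrixP => i j; rewrite /U !mxE conjCK.
have dge0 l : 0 <= d 0 l.
  have := H (U *m delta_mx l 0); rewrite {1}eX -!mulmxA (mulmxA P) PU mul1mx.
  rewrite mulmxA dotv_adj adjmxM adjU -mulmxA (mulmxA P) PU mul1mx -dotv_adj -colE dotv_delta !mxE eqxx mulr1n.
  done.
exists (fun l => sqrtC (d 0 l) *: (U *m delta_mx l 0)).
apply/matrixP => i j; rewrite summxE eX mul_mx_diag mxE.
apply: eq_bigr => l _; rewrite -colE !mxE big_ord1 !mxE cM conjCK.
rewrite (conj_Creal (sqrtC_real (dge0 l))).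
rewrite -{1}(sqrtCK (d 0 l)) expr2; ring.
Qed.
End P2.


Section M.
Variable C : numClosedFieldType.

Lemma mulmx_1 p (v : 'cV[C]_p) (M : 'M[C]_1) : v *m M = M 0 0 *: v.
Proof. by apply/matrixP => i j; rewrite !mxE big_ord1 !ord1 mulrC. Qed.

Lemma psd_rank1 p (v : 'cV[C]_p) : psd (v *m adjmx v).
Proof.
move=> z.
have -> : dotv (v *m adjmx v *m z) z = dotv z v * (dotv z v)^*.
  by rewrite -mulmxA mulmx_1 dotvZl (dotvC z v) -/(dotv z v).
exact: mul_conjC_ge0.
Qed.

Lemma dotv_mulsuml p I (r : seq I) (F : I -> 'M[C]_p) w :
  dotv ((\sum_(i <- r) F i) *m w) w = \sum_(i <- r) dotv (F i *m w) w.
Proof. by rewrite mulmx_suml dotv_suml. Qed.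

Variables (m n : nat) (phi : {linear 'M[C]_m -> 'M[C]_n}).

Lemma ampl_sum k N (F : 'I_N -> 'M[C]_(m * k)) :
  ampl phi (\sum_l F l) = \sum_l ampl phi (F l).
Proof.
apply/matrixP => r s; case: (mxtens_indexP r) => p a; case: (mxtens_indexP s) => q b.
rewrite amplE summxE.
have -> : blk (\sum_l F l) a b = \sum_l blk (F l) a b.
  by apply/matrixP => i j; rewrite !mxE !summxE; apply: eq_bigr => l _; rewrite mxE.
by rewrite raddf_sum summxE; apply: eq_bigr => l _; rewrite amplE.
Qed.

Lemma kposE k : kpos k phi <->
  (forall x, in_Sk k x -> 0 <= dotv (choi phi *m x) x).
Proof.
split.
  move=> Hk x [xs [ys ->]].
  pose v : 'cV[C]_(m * k) := \col_r (xs (mxtens_unindex r).2 (mxtens_unindex r).1 0)^*.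
  pose w : 'cV[C]_(n * k) := \col_r (ys (mxtens_unindex r).2 (mxtens_unindex r).1 0).
  have ev a : map_mx (fun z => z^*) (vcol v a) = xs a.
    by apply/matrixP => i j; rewrite !mxE mxtens_indexK conjCK !ord1.
  have ew a : vcol w a = ys a.
    by apply/matrixP => i j; rewrite !mxE mxtens_indexK !ord1.
  have := Hk _ (psd_rank1 v) w; rewrite Klem.
  have -> : \sum_a tensv (map_mx (fun z => z^*) (vcol v a)) (vcol w a) =
            \sum_a tensv (xs a) (ys a).
    by apply: eq_bigr => a _; rewrite ev ew.
  done.
move=> HS X HX w.
have [vs ->] := psd_decomp HX.
rewrite ampl_sum dotv_mulsuml; apply: sumr_ge0 => l _.
rewrite Klem; apply: HS.
by exists (fun a => map_mx (fun z => z^*) (vcol (vs l) a)), (fun a => vcol w a).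
Qed.
End M.


Section Q.
Variable C : numClosedFieldType.

Lemma Glem (L q : C) : 0 <= q ->
  (forall e : C, e \is Num.real -> 0 <= e * L + e ^+ 2 * q) -> L = 0.
Proof.
move=> q0 H.
have qR : q \is Num.real := ger0_real q0.
have LR : L \is Num.real.
  have := H 1 (rpred1 _); rewrite mul1r expr1n mul1r => /ger0_real h.
  by have := rpredB h qR; rewrite addrK.
have q1 : q + 1 != 0 by rewrite gt_eqF // ltr_wpDl.
set x := L / (q + 1).
have xR : x \is Num.real by rewrite rpredM // rpredV rpredD // rpred1.
have nxR : - x \is Num.real by rewrite rpredN.
have := H (- x) nxR.
have -> : - x * L + (- x) ^+ 2 * q = - x ^+ 2.
  rewrite /x; field; exact: q1.
rewrite oppr_ge0 => hx.
have : x ^+ 2 = 0 by apply/le_anti; rewrite hx real_exprn_even_ge0.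
move/eqP; rewrite sqrf_eq0 /x mulf_eq0 invr_eq0 (negPf q1) orbF => /eqP //.
Qed.

Lemma Pert p (A : 'M[C]_p) (y z : 'cV[C]_p) :
  dotv (A *m y) y = 0 ->
  (forall c : C, 0 <= dotv (A *m (y + c *: z)) (y + c *: z)) ->
  dotv (A *m y) z = 0.
Proof.
move=> hy H.
set a := dotv (A *m z) y; set b := dotv (A *m y) z; set q := dotv (A *m z) z.
have fE c : dotv (A *m (y + c *: z)) (y + c *: z) = c^* * b + c * a + c * c^* * q.
  rewrite mulmxDr -scalemxAr !dotvDl !dotvDr !dotvZl !dotvZr hy -/a -/b -/q; ring.
have q0 : 0 <= q.
  have h1 := H 1; have h2 := H (-1).
  rewrite fE in h1; rewrite fE in h2.
  have : 0 <= 2%:R * q.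
    have -> : 2%:R * q = (1^* * b + 1 * a + 1 * 1^* * q) +
        ((-1)^* * b + -1 * a + -1 * (-1)^* * q).
      by rewrite cN conjC1; ring.
    exact: addr_ge0.
  by rewrite pmulr_rge0 // ltr0n.
have E1 : a + b = 0.
  apply: (Glem q0) => e eR.
  have := H e; rewrite fE (conj_Creal eR).
  by have -> : e * (a + b) + e ^+ 2 * q = e * b + e * a + e * e * q by ring.
have E2 : 'i * (a - b) = 0.
  apply: (Glem q0) => e eR.
  have := H ('i * e); rewrite fE cM conjCi (conj_Creal eR).
  have -> : e * ('i * (a - b)) + e ^+ 2 * q =
      - 'i * e * b + 'i * e * a + 'i * e * (- 'i * e) * q
      + e ^+ 2 * q * (1 + 'i * 'i) by ring.
  by rewrite mulCii subrr mulr0 addr0.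
have : a - b = 0.
  by move/eqP: E2; rewrite mulf_eq0 (negPf (neq0Ci C)) /= => /eqP.
move=> E3.
have : 2%:R * b = 0.
  transitivity ((a + b) - (a - b)); first ring.
  by rewrite E1 E3 subrr.
by move/eqP; rewrite mulf_eq0 pnatr_eq0 /= => /eqP.
Qed.
End Q.


Section F.
Variable C : numClosedFieldType.
Variables (m n : nat) (phi : {linear 'M[C]_m -> 'M[C]_n}).

Lemma kpos1 : posmap phi -> kpos 1 phi.
Proof.
move=> Hpos X HX w.
have psdblk : psd (blk X 0 0).
  move=> u; pose u' : 'cV[C]_(m * 1) := \col_r u (mxtens_unindex r).1 0.
  have := HX u'.
  suff -> : dotv (X *m u') u' = dotv (blk X 0 0 *m u) u by [].
  rewrite !dotv_mulE sum_tens; apply: eq_bigr => i _; rewrite big_ord1.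
  rewrite sum_tens; apply: eq_bigr => j _; rewrite big_ord1.
  by rewrite !mxE !mxtens_indexK.
have := Hpos _ psdblk (\col_p w (mxtens_index (p, 0)) 0).
suff -> : dotv (ampl phi X *m w) w =
  dotv (phi (blk X 0 0) *m \col_p w (mxtens_index (p, 0)) 0)
       (\col_p w (mxtens_index (p, 0)) 0) by [].
rewrite !dotv_mulE sum_tens; apply: eq_bigr => p _; rewrite big_ord1.
rewrite sum_tens; apply: eq_bigr => q _; rewrite big_ord1.
by rewrite amplE !mxE.
Qed.

Lemma tensv_delta (i : 'I_m) (p : 'I_n) :
  tensv (delta_mx i 0 : 'cV[C]_m) (delta_mx p 0 : 'cV[C]_n) =
  delta_mx (mxtens_index (i, p)) 0.
Proof.
apply/matrixP => r c; case: (mxtens_indexP r) => i' p'.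
rewrite tensvE !mxE (inj_eq (can_inj (@mxtens_indexK m n))) xpair_eqE !ord1 !eqxx.
by case: (i' == i); case: (p' == p); rewrite ?mul1r ?mul0r.
Qed.

Lemma col_zero (u : 'cV[C]_(m * n)) :
  (forall i p, dotv u (tensv (delta_mx i 0) (delta_mx p 0)) = 0) -> u = 0.
Proof.
move=> H; apply/matrixP => r c; case: (mxtens_indexP r) => i p.
by rewrite [c]ord1 mxE; have := H i p; rewrite tensv_delta dotv_delta.
Qed.

Lemma tensvZ c (u : 'cV[C]_m) (y : 'cV[C]_n) : tensv (c *: u) y = c *: tensv u y.
Proof. by apply/matrixP => r j; rewrite !mxE mulrA. Qed.

Lemma inSkZ k c (x : 'cV[C]_(m * n)) : in_Sk k x -> in_Sk k (c *: x).
Proof.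
move=> [xs [ys ->]]; exists (fun a => c *: xs a), ys.
by rewrite scaler_sumr; apply: eq_bigr => a _; rewrite tensvZ.
Qed.

Lemma inSk_ext k (y : 'cV[C]_(m * n)) u v c :
  in_Sk k y -> in_Sk k.+1 (y + c *: tensv u v).
Proof.
move=> [xs [ys ->]].
exists (fun a => if unlift ord_max a is Some a' then xs a' else c *: u).
exists (fun a => if unlift ord_max a is Some a' then ys a' else v).
rewrite big_ord_recr /= unlift_none tensvZ; congr (_ + _).
apply: eq_bigr => a _.
have -> : widen_ord (leqnSn k) a = lift ord_max a by apply: ord_inj; rewrite lift_max.
by rewrite liftK.
Qed.

Lemma dotvNl p (u z : 'cV[C]_p) : dotv (- u) z = - dotv u z.
Proof. by rewrite -scaleN1r dotvZl mulN1r. Qed.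
End F.


Unset Implicit Arguments.
Set Strict Implicit.

Theorem theorem4 (R : realType) (m n : nat)
  (phi : {linear 'M[R[i]]_m -> 'M[R[i]]_n}) (k : nat) :
  posmap phi -> (1 <= k)%N ->
  ( (~ (forall A : 'M[R[i]]_m, phi A = 0)) ->
    forall (P : 'M[R[i]]_(m * n)) (s : R[i]),
      is_pos_part (choi phi) P -> is_opnorm P s ->
      (kpos k phi <->
       (forall x : 'cV[R[i]]_(m * n), in_Sk k x -> dotv x x = 1 ->
          dotv ((1%:M - s^-1 *: choi phi) *m x) x <= 1)) )
  /\
  ( (k < minn m n)%N ->
    (exists (xs : 'I_k -> 'cV[R[i]]_m) (ys : 'I_k -> 'cV[R[i]]_n),
       let y := \sum_(i < k) tensv (xs i) (ys i) in
       dotv y y = 1 /\ dotv (choi phi *m y) y = 0 /\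
       ~ in_tens_span xs ys (choi phi *m y)) ->
    ~ kpos k.+1 phi ).
Proof.
move=> Hpos Hk; split.
- move=> _ P s [Ppsd [PNpsd _]] [s0 [sb _]].
  rewrite (kposE phi k).
  have S1 := (kposE phi 1).1 (kpos1 Hpos).
  have [sz|snz] := eqVneq s 0.
  + have P0 : P = 0.
      apply/matrixP => i j; have := sb (delta_mx j 0).
      rewrite sz expr0n mul0r => h.
      have : P *m (delta_mx j 0 : 'cV_(m * n)) = 0.
        have h' : dotv (P *m delta_mx j 0) (P *m delta_mx j 0) = 0.
          by apply/le_anti; rewrite h dotv_ge0.
        exact: (dotv_eq0 h').
      by rewrite -colE => /matrixP/(_ i 0); rewrite !mxE.
    rewrite P0 in PNpsd.
    have Cz u v : choi phi *m tensv u v = 0.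
      have S1z : 0 <= dotv (choi phi *m tensv u v) (tensv u v).
        by apply: S1; exists (fun _ => u), (fun _ => v); rewrite big_ord1.
      have hz : dotv ((0 - choi phi) *m tensv u v) (tensv u v) = 0.
        rewrite sub0r mulNmx dotvNl; apply/eqP; rewrite oppr_eq0; apply/eqP.
        apply/le_anti; rewrite S1z andbT -oppr_ge0.
        by have := PNpsd (tensv u v); rewrite sub0r mulNmx dotvNl.
      apply: col_zero => i p.
      have := Pert (z := tensv (delta_mx i 0) (delta_mx p 0)) hz (fun c => PNpsd _).
      by rewrite sub0r mulNmx dotvNl => /eqP; rewrite oppr_eq0 => /eqP.
    have Cx x : in_Sk k x -> choi phi *m x = 0.
      by move=> [xs [ys ->]]; rewrite mulmx_sumr big1 // => a _; rewrite Cz.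
    split => H x xS.
      by move=> xu; rewrite sz invr0 scale0r subr0 mul1mx xu.
    by rewrite Cx // dotv0l.
  + have sp : 0 < s by rewrite lt_def snz s0.
    have fE x : dotv ((1%:M - s^-1 *: choi phi) *m x) x =
                dotv x x - s^-1 * dotv (choi phi *m x) x.
      by rewrite mulmxBl mul1mx -scalemxAl dotvDl dotvNl dotvZl.
    split => H x xS.
      move=> xu; rewrite fE xu gerBl pmulr_rge0 ?invr_gt0 //; exact: H.
    have [->|xnz] := eqVneq x 0; first by rewrite mulmx0 dotv0l.
    set r := dotv x x.
    have rp : 0 < r.
      rewrite lt_def dotv_ge0 andbT; apply/eqP => /dotv_eq0 x0.
      by rewrite x0 eqxx in xnz.
    set c := (sqrtC r)^-1.
    have cR : c \is Num.real by rewrite rpredV sqrtC_real // ltW.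
    have cp : 0 < c by rewrite invr_gt0 sqrtC_gt0.
    have := H (c *: x) (inSkZ c xS).
    rewrite fE -scalemxAr !dotvZl !dotvZr (conj_Creal cR) -/r.
    have -> : c * (c * r) = 1.
      rewrite mulrA -expr2 /c exprVn sqrtCK mulVf //; exact: lt0r_neq0.
    move=> /(_ erefl); rewrite gerBl pmulr_rge0 ?invr_gt0 // !pmulr_rge0 //.
- move=> _ [xs [ys]] /= [yu [hy hnot]] hk1.
  apply: hnot.
  have HS := (kposE phi k.+1).1 hk1.
  have Cy0 : choi phi *m (\sum_(i < k) tensv (xs i) (ys i)) = 0.
    apply: col_zero => i p; apply: Pert hy _ => c; apply: HS.
    by apply: inSk_ext; exists xs, ys.
  exists 0%N, (fun _ => 0), (fun _ => 0); split; first by case.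
  by split; [case | rewrite big_ord0 Cy0].
Qed.
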